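(* Let $S=\{\rho_1=0<\rho_2<\cdots\}$ be an Arf numerical semigroup with conductor $c=\rho_r$, and for a positive integer $i$ put $p_i=c+\rho_{i+1}-1$. Then $\alpha(p_i)=i$. Moreover, if $i<r$, then $\beta(p_i)=i$ and $\#A[p_i]=2i$.
   Context: A numerical semigroup is a submonoid $S$ of $(\mathbb{N}_0,+)$ with finite complement, with elements listed increasingly. $S$ is Arf if $\rho_i+\rho_j-\rho_k\in S$ for all positive integers $i\ge j\ge k$. The conductor $c$ is the smallest integer such that all integers $\ge c$ lie in $S$, with $c=\rho_r$. For $\rho\in S$: $A[\rho]=\{p\in S:\ \rho-p\in S\}$, $\alpha(\rho)=\max\{j\ge1:\ \rho_1,\dots,\rho_j\in A[\rho]\}$ and $\beta(\rho)=\max\{j\ge1:\ \rho_1,\dots,\rho_j\in A[\rho]\ \text{and}\ 2\rho_j\le\rho\}$. *)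

(* Defs.v *)
From mathcomp Require Import all_boot.
Set Implicit Arguments. Unset Strict Implicit. Unset Printing Implicit Defensive.

Definition numerical_semigroup (S : pred nat) : Prop :=
  S 0 /\ (forall a b, S a -> S b -> S (a + b)) /\
  (exists N, forall n, N <= n -> S n).

Definition enumerates (S : pred nat) (rho : nat -> nat) : Prop :=
  (forall i j, 1 <= i -> i < j -> rho i < rho j) /\
  (forall n, S n <-> exists2 i, 1 <= i & rho i = n).

Definition Arf (S : pred nat) (rho : nat -> nat) : Prop :=
  forall i j k, 1 <= k -> k <= j -> j <= i -> S (rho i + rho j - rho k).

Definition is_conductor (S : pred nat) (c : nat) : Prop :=
  (forall n, c <= n -> S n) /\
  (forall m, (forall n, m <= n -> S n) -> c <= m).

Definition Aset (S : pred nat) (p : nat) : seq nat :=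
  [seq q <- iota 0 p.+1 | S q && S (p - q)].

Definition prefix_in_A (S : pred nat) (rho : nat -> nat) (p j : nat) : Prop :=
  forall k, 1 <= k <= j -> rho k \in Aset S p.

Definition alpha_is (S : pred nat) (rho : nat -> nat) (p a : nat) : Prop :=
  [/\ 1 <= a, prefix_in_A S rho p a &
      forall j, 1 <= j -> prefix_in_A S rho p j -> j <= a].

Definition beta_is (S : pred nat) (rho : nat -> nat) (p b : nat) : Prop :=
  [/\ 1 <= b, prefix_in_A S rho p b /\ 2 * rho b <= p &
      forall j, 1 <= j -> prefix_in_A S rho p j -> 2 * rho j <= p -> j <= b].

(* Main.v *)
Require Import Defs.
From mathcomp Require Import all_boot.
From mathcomp Require Import zify.

Lemma memA (S : pred nat) p q :
  (q \in Aset S p) = [&& q <= p, S q & S (p - q)].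
Proof.
rewrite mem_filter mem_iota add0n ltnS leq0n /=.
by case: (S q); case: (S (p - q)); case: (q <= p).
Qed.

Theorem mainTheorem7 (S : pred nat) (rho : nat -> nat) (c r : nat) :
  numerical_semigroup S -> enumerates S rho -> Arf S rho ->
  is_conductor S c -> 1 <= r -> rho r = c ->
  forall i : nat, 1 <= i ->
    let p := c + rho i.+1 - 1 in
    alpha_is S rho p i /\
    (i < r -> beta_is S rho p i /\ size (Aset S p) = 2 * i).
Proof.
move=> [S0 [Sadd [N SN]]] [rinc rS] Arf_ [condS condmin] r1 rr i i1 p.
have mono: forall a b, 1 <= a -> a <= b -> rho a <= rho b.
  move=> a b a1; rewrite leq_eqVlt => /orP[/eqP->//|ab].
  exact/ltnW/rinc.
have Srho: forall k, 1 <= k -> S (rho k) by move=> k k1; apply/rS; exists k.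
have notSc1: 0 < c -> ~~ S (c.-1).
  move=> c0; apply/negP=> Sc.
  have : c <= c.-1.
    apply: condmin => n hn.
    case: (leqP c n) => h; first exact: condS.
    have -> : n = c.-1 by lia.
    exact: Sc.
  lia.
have lt_i1 : forall k, 1 <= k -> k <= i -> rho k < rho i.+1.
  by move=> k k1 ki; apply: rinc.
have r1i : rho 1 < rho i.+1 by apply: rinc.
have inA: forall k, 1 <= k <= i -> rho k \in Aset S p.
  move=> k /andP[k1 ki]; rewrite memA; have:= lt_i1 k k1 ki => h.
  apply/and3P; split; first by rewrite /p; lia.
    exact: Srho.
  apply: condS; rewrite /p; lia.
have notA: rho i.+1 \notin Aset S p.
  rewrite memA; apply/negP => /and3P[h1 _ h2].
  have c0: 0 < c by rewrite /p in h1; lia.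
  have e: p - rho i.+1 = c.-1 by rewrite /p; lia.
  rewrite e in h2. by have := notSc1 c0; rewrite h2.
have alpha: alpha_is S rho p i.
  split => // [j j1 hj].
  rewrite leqNgt; apply/negP => ij.
  have h := hj i.+1; rewrite ij andbT in h.
  by move: notA; rewrite h.
split=> // ir.
have rir: rho i < c by rewrite -rr; apply: rinc.
have c0 : 0 < c by lia.
have rinj: forall a b, 1 <= a -> 1 <= b -> rho a = rho b -> a = b.
  move=> a b a1 b1 e; case: (ltngtP a b) => // h.
    by have := rinc _ _ a1 h; lia.
  by have := rinc _ _ b1 h; lia.
split.
  split => //.
    split; first exact: inA.
    rewrite /p; have := lt_i1 i i1 (leqnn i); lia.
  by move=> j j1 hj _; case: alpha => _ _; apply.
set L := map rho (iota 1 i) ++ map (fun k => p - rho k) (iota 1 i).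
have pe: perm_eq (Aset S p) L.
  apply: uniq_perm.
  - exact/filter_uniq/iota_uniq.
  - rewrite cat_uniq; apply/and3P; split.
    + rewrite map_inj_in_uniq ?iota_uniq // => a b; rewrite !mem_iota => ha hb.
      apply: rinj; lia.
    + apply/hasP => [[x /mapP[k hk ->] /mapP[l hl e]]].
      rewrite mem_iota in hk; rewrite mem_iota in hl.
      have := mono k i ltac:(lia) ltac:(lia).
      have := mono l i ltac:(lia) ltac:(lia).
      have := lt_i1 i i1 (leqnn i).
      rewrite /p in e; lia.
    + rewrite map_inj_in_uniq ?iota_uniq // => a b; rewrite !mem_iota => ha hb e.
      have := lt_i1 a ltac:(lia) ltac:(lia).
      have := lt_i1 b ltac:(lia) ltac:(lia).
      move=> h1 h2; apply: rinj; rewrite /p in e; lia.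
  - move=> q; rewrite mem_cat memA; apply/idP/idP.
    + move/and3P=> [qp Sq Sq'].
      have [a a1 ea] := (rS q).1 Sq.
      have [b b1 eb] := (rS _).1 Sq'.
      case: (leqP a i) => ai.
        apply/orP; left; apply/mapP; exists a; last by [].
        rewrite mem_iota; lia.
      case: (leqP b i) => bi.
        apply/orP; right; apply/mapP; exists b; first by rewrite mem_iota; lia.
        lia.
      exfalso.
      have key: forall x y, i < y -> y <= x -> rho x + rho y = p -> False.
        move=> x y iy yx e.
        have := Arf_ x y i.+1 isT iy yx; rewrite e.
        have -> : p - rho i.+1 = c.-1 by rewrite /p; lia.
        by move=> h; have := notSc1 c0; rewrite h.
      case: (leqP b a) => h; [apply: (key a b) | apply: (key b a)]; lia.
    + case/orP => /mapP[k hk ->]; rewrite mem_iota in hk.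
        by rewrite -memA; apply: inA; lia.
      have := lt_i1 k ltac:(lia) ltac:(lia) => h.
      apply/and3P; split; first lia.
        apply: condS; rewrite /p; lia.
      have -> : p - (p - rho k) = rho k by rewrite /p; lia.
      apply: Srho; lia.
rewrite (perm_size pe) size_cat !size_map size_iota; lia.
Qed.
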